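(* Let $(E,d)$ be a metric vector space over $K\in\{\mathbb R,\mathbb C,\mathbb H\}$ such that $d$ is $C_0$-translation invariant for some $C_0\ge0$. Then for all $x,y\in E$ the limit $\delta(x,y)=\lim_{n\to+\infty}\frac1n d(nx,ny)$ exists, and $\delta(x,y)\le d(x,y)+2C_0$.
   Context: A metric vector space is a topological vector space over $K$ whose topology is generated by the metric $d$. $d$ is $C_0$-translation invariant if $d(x+z,y+z)\le d(x,y)+C_0$ for all $x,y,z\in E$. *)

(* Defs.v *)
From HB Require Import structures.
From mathcomp Require Import all_boot all_order all_algebra.
From mathcomp Require Import all_classical all_reals all_analysis.
Set Implicit Arguments. Unset Strict Implicit. Unset Printing Implicit Defensive.
Import Order.TTheory GRing.Theory Num.Theory numFieldNormedType.Exports.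
Local Open Scope classical_set_scope.
Local Open Scope ring_scope.

Definition is_metric (R : realType) (E : Type) (d : E -> E -> R) : Prop :=
  [/\ forall x y, 0 <= d x y,
      forall x y, d x y = 0 <-> x = y,
      forall x y, d x y = d y x &
      forall x y z, d x z <= d x y + d y z].

Definition metric_generates_topology (R : realType) (E : topologicalType)
  (d : E -> E -> R) : Prop :=
  forall (x : E) (A : set E),
    nbhs x A <-> exists2 e : R, 0 < e & [set y | d x y < e] `<=` A.

Definition metric_vector_space (K : numFieldType) (R : realType)
  (E : topologicalLmodType K) (d : E -> E -> R) : Prop :=
  is_metric d /\ metric_generates_topology d.

Definition translation_invariant_up_to (R : realType) (E : zmodType)
  (d : E -> E -> R) (C0 : R) : Prop :=
  forall x y z : E, d (x + z) (y + z) <= d x y + C0.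

(* Main.v *)
Require Import Defs.
From HB Require Import structures.
From mathcomp Require Import all_boot all_order all_algebra.
From mathcomp Require Import all_classical all_reals all_analysis.
From mathcomp Require Import ring lra.
Import Order.TTheory GRing.Theory Num.Theory numFieldNormedType.Exports.
Local Open Scope classical_set_scope.
Local Open Scope ring_scope.

Theorem proposition1 (K : numFieldType) (R : realType)
  (E : topologicalLmodType K) (d : E -> E -> R) (C0 : R) :
  metric_vector_space d ->
  0 <= C0 ->
  translation_invariant_up_to d C0 ->
  forall x y : E,
    cvg ((fun n : nat => d (x *+ n) (y *+ n) / n%:R) @ \oo) /\
    lim ((fun n : nat => d (x *+ n) (y *+ n) / n%:R) @ \oo) <= d x y + 2 * C0.
Proof.
move=> [[d0 _ dC dT] _] C0ge TI x y.
set a := fun n : nat => d (x *+ n) (y *+ n).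
set b := fun n : nat => a n + 2 * C0.
have b0 : forall n, 0 <= b n by move=> n; rewrite /b /a; have := d0 (x *+ n) (y *+ n); lra.
have Hsub : forall m n, b (m + n)%N <= b m + b n.
  move=> m n; rewrite /b /a !mulrnDr.
  have h1 := dT (x *+ m + x *+ n) (y *+ m + x *+ n) (y *+ m + y *+ n).
  have h2 := TI (x *+ m) (y *+ m) (x *+ n).
  have h3 := TI (x *+ n) (y *+ n) (y *+ m).
  rewrite [x *+ n + _]addrC [y *+ n + _]addrC in h3.
  lra.
have Hq : forall m q r, b (q * m + r)%N <= q%:R * b m + b r.
  move=> m; elim=> [|q IH] r; first by rewrite mul0n add0n mul0r add0r.
  rewrite mulSn -addnA; apply: (le_trans (Hsub _ _)).
  rewrite mulrSr; have := IH r; lra.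
have Hbd : forall m, exists M, forall r, (r < m)%N -> b r <= M.
  elim=> [|m IH]; first by exists 0.
  have [M HM] := IH.
  exists (Num.max M (b m)) => r; rewrite ltnS leq_eqVlt => /orP[/eqP->|/HM h].
    by rewrite le_max lexx orbT.
  by rewrite le_max h.
set S := range (fun n : nat => b n.+1 / n.+1%:R).
set L := inf S.
have Slb : has_lbound S.
  by exists 0 => _ [n _ <-]; rewrite divr_ge0.
have Sne : S !=set0 by exists (b 1 / 1%:R); exists 0%N.
have lower : forall n, (0 < n)%N -> L <= b n / n%:R.
  by case=> // n _; apply: ge_inf => //; exists n.
have upper : forall eps, 0 < eps -> \forall n \near \oo, b n / n%:R <= L + eps.
  move=> eps eps0.
  have hL : L < L + eps / 2 by rewrite ltrDl divr_gt0.
  have [z [k _ <-] hk] := inf_lt Sne hL.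
  have L0 : 0 <= L by apply: lb_le_inf => // _ [j _ <-]; rewrite divr_ge0.
  have [M HM] := Hbd k.+1.
  near=> n.
  have n0 : (0 < n)%N by near: n; exact: nbhs_infty_gt.
  have nM : 2 * M / eps < n%:R by near: n; exact: nbhs_infty_gtr.
  have hr := HM (n %% k.+1)%N (ltn_pmod _ _).
  have := Hq k.+1 (n %/ k.+1)%N (n %% k.+1)%N.
  rewrite -divn_eq.
  have hq : ((n %/ k.+1) * k.+1)%:R <= n%:R :> R by rewrite ler_nat leq_trunc_div.
  rewrite natrM in hq.
  set qr := (n %/ k.+1)%:R in hq *.
  have qr0 : 0 <= qr by [].
  have N0 : 0 < n%:R :> R by rewrite ltr0n.
  have m0 : 0 < k.+1%:R :> R by rewrite ltr0n.
  rewrite ltr_pdivrMr // in hk.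
  rewrite ltr_pdivrMr // in nM.
  move=> hb; rewrite ler_pdivrMr //.
  have h1 : qr * b k.+1 <= qr * ((L + eps / 2) * k.+1%:R) by rewrite ler_wpM2l // ltW.
  have h2 : (qr * k.+1%:R) * (L + eps/2) <= n%:R * (L + eps / 2).
    by rewrite ler_wpM2r // addr_ge0 // divr_ge0 // ltW.
  have h12 : qr * b k.+1 <= n%:R * (L + eps / 2).
    apply: (le_trans h1); apply: le_trans h2; rewrite le_eqVlt; apply/orP; left; apply/eqP; ring.
  move: h12 nM hb hr; set B := b k.+1; set N : R := n%:R; set bn := b n; set br := b _.
  move=> h12 nM hb /(_ isT) hr.
  have e1 : (L + eps) * N = N * (L + eps/2) + N * eps / 2 by field.
  rewrite e1.
  lra.
have Hc : (fun n : nat => d (x *+ n) (y *+ n) / n%:R) @ \oo --> L.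
  apply/cvgrPdist_le => eps eps0.
  have U := upper (eps / 2) (divr_gt0 eps0 (ltr0Sn _ _)).
  near=> n.
  have n0 : (0 < n)%N by near: n; exact: nbhs_infty_gt.
  have nC : 4 * C0 / eps < n%:R by near: n; exact: nbhs_infty_gtr.
  have hu : b n / n%:R <= L + eps / 2 by near: n.
  have hl := lower n n0.
  have N0 : 0 < n%:R :> R by rewrite ltr0n.
  rewrite ltr_pdivrMr // in nC.
  have e : b n / n%:R = a n / n%:R + 2 * C0 / n%:R by rewrite /b mulrDl.
  have ht : 2 * C0 / n%:R <= eps / 2 by rewrite ler_pdivrMr //; lra.
  have ht0 : 0 <= 2 * C0 / n%:R by rewrite divr_ge0 // mulr_ge0.
  rewrite ler_norml; rewrite e in hu hl.
  change (d (x *+ n) (y *+ n)) with (a n).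
  apply/andP; split; lra.
split; first by apply/cvg_ex; exists L.
rewrite (cvg_lim _ Hc) //.
by have := lower 1%N isT; rewrite /b /a !mulr1n divr1.
Unshelve. all: end_near.
Qed.
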